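(* Consider the setting described in the context. Suppose that: (i) $\frac{1}{n} \sum_{i=1}^{n} \lVert Q^*(x^i)\rVert^4 \xrightarrow{p} \mathbb{E}[\lVert Q^*(X)\rVert^4]$ and $\frac{1}{n} \sum_{i=1}^{n} \lVert [Q^*(x^i)]^{-1}\rVert^2 \xrightarrow{p} \mathbb{E}[\lVert [Q^*(X)]^{-1}\rVert^2]$, where these expectations are finite; (ii) $\frac{1}{n} \sum_{i=1}^{n} \lVert\varepsilon^i\rVert^4 \xrightarrow{p} \mathbb{E}[\lVert\varepsilon\rVert^4] < +\infty$; (iii) $\hat{f}_n(x) \xrightarrow{p} f^*(x)$ and $\hat{Q}_n(x) \xrightarrow{p} Q^*(x)$ for $P_X$-a.e. $x \in \mathcal{X}$, and $\frac{1}{n} \sum_{i=1}^{n} \lVert \hat{f}_n(x^i) - f^*(x^i)\rVert^2 \xrightarrow{p} 0$ and $\frac{1}{n} \sum_{i=1}^{n} \lVert [\hat{Q}_n(x^i)]^{-1} - [Q^*(x^i)]^{-1}\rVert^2 \xrightarrow{p} 0$. Then $\frac{1}{n} \sum_{i=1}^{n} \lVert \tilde{\varepsilon}^i_n(x)\rVert \xrightarrow{p} 0$ for $P_X$-a.e. $x \in \mathcal{X}$.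
   Context: Random vectors $Y \in \mathbb{R}^{d_y}$ and covariates $X \in \mathbb{R}^{d_x}$ satisfy $Y = f^*(X) + Q^*(X)\varepsilon$, where $f^*:\mathbb{R}^{d_x}\to\mathbb{R}^{d_y}$, $Q^*:\mathbb{R}^{d_x}\to\mathbb{R}^{d_y\times d_y}$, the zero-mean random error $\varepsilon \in \mathbb{R}^{d_y}$ is independent of $X$, and $Q^*(x) \succ 0$ (positive definite) for $P_X$-a.e. $x$ in the support $\mathcal{X}$ of $X$ ($P_X$ is the distribution of $X$). Data $\mathcal{D}_n = \{(y^i,x^i)\}_{i=1}^n$ are joint observations of $(Y,X)$, with corresponding error realizations $\varepsilon^i = [Q^*(x^i)]^{-1}(y^i - f^*(x^i))$. Regression estimates $\hat{f}_n$ of $f^*$ and $\hat{Q}_n$ of $Q^*$ are computed from $\mathcal{D}_n$, with $\hat{Q}_n(x) \succ 0$ almost surely for $P_X$-a.e. $x \in \mathcal{X}$. Define empirical residuals $\hat{\varepsilon}^i_n := [\hat{Q}_n(x^i)]^{-1}(y^i - \hat{f}_n(x^i))$ and, for $x \in \mathcal{X}$, the deviation terms $\tilde{\varepsilon}^i_n(x) := (\hat{f}_n(x) + \hat{Q}_n(x)\hat{\varepsilon}^i_n) - (f^*(x) + Q^*(x)\varepsilon^i)$, $i=1,\dots,n$. $\lVert\cdot\rVert$ is the Euclidean norm on vectors and the induced operator norm on matrices. $\xrightarrow{p}$ denotes convergence in probability as $n\to\infty$ with respect to the probability measure generating the data. *)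

(* Defs.v *)
From HB Require Import structures.
From mathcomp Require Import all_boot all_order all_algebra.
From mathcomp Require Import all_classical all_reals all_analysis.
Set Implicit Arguments. Unset Strict Implicit. Unset Printing Implicit Defensive.
Import Order.TTheory GRing.Theory Num.Theory.
Local Open Scope classical_set_scope.
Local Open Scope ring_scope.

Definition enorm {R : realType} {n : nat} (v : 'cV[R]_n) : R :=
  Num.sqrt (\sum_(i < n) v i 0 ^+ 2).

Definition opnorm {R : realType} {n : nat} (A : 'M[R]_n) : R :=
  sup [set enorm (A *m v) | v in [set v : 'cV[R]_n | enorm v <= 1]].

Definition posdef {R : realType} {n : nat} (A : 'M[R]_n) : Prop :=
  A^T = A /\ forall v : 'cV[R]_n, v != 0 -> 0 < (v^T *m A *m v) 0 0.

(* R^n with its Borel sigma-algebra, generated by the coordinate maps. *)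
Definition Rvec (R : realType) (n : nat) : Type := 'cV[R]_n.
HB.instance Definition _ (R : realType) (n : nat) :=
  Choice.copy (Rvec R n) 'cV[R]_n.
HB.instance Definition _ (R : realType) (n : nat) :=
  isPointed.Build (Rvec R n) (0 : 'cV[R]_n).

Definition coord_gen (R : realType) (n : nat) : set (set (Rvec R n)) :=
  [set B | exists (i : 'I_n) (A : set R),
     measurable A /\ B = (fun v : 'cV[R]_n => v i 0) @^-1` A].

HB.instance Definition _ (R : realType) (n : nat) :=
  @isMeasurable.Build (sigma_display (@coord_gen R n)) (Rvec R n)
  <<s @coord_gen R n >> (@sigma_algebra0 _ setT (@coord_gen R n))
  (@sigma_algebraC _ (@coord_gen R n))
  (@sigma_algebra_bigcup _ setT (@coord_gen R n)).

Definition outerP {d} {T : measurableType d} {R : realType}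
  (P : probability T R) (A : set T) : \bar R :=
  ereal_inf [set P B | B in [set B | measurable B /\ A `<=` B]].

Definition cvg_in_prob {d} {T : measurableType d} {R : realType}
  (P : probability T R) (Z : nat -> T -> R) (c : R) : Prop :=
  forall delta : R, 0 < delta ->
    outerP P [set w | delta < `|Z n w - c|] @[n --> \oo] --> 0%E.

Definition indep2 {d d1 d2} {T : measurableType d} {T1 : measurableType d1}
  {T2 : measurableType d2} {R : realType} (P : probability T R)
  (U : T -> T1) (V : T -> T2) : Prop :=
  forall A B, measurable A -> measurable B ->
    P (U @^-1` A `&` V @^-1` B) = (P (U @^-1` A) * P (V @^-1` B))%E.

(* empirical mean (1/n) sum_{i=1}^n a_i, indices shifted to 0..n-1 *)
Definition emean {R : realType} (n : nat) (a : nat -> R) : R :=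
  n%:R^-1 * \sum_(i < n) a i.

(* residual  [Q(x)]^{-1} (y - f(x)) ; with (f,Q) = (fstar,Qstar) this is eps^i,
   with (f,Q) = (\hat f_n, \hat Q_n) this is \hat eps^i_n *)
Definition resid {R : realType} {dx dy : nat}
  (f : 'cV[R]_dx -> 'cV[R]_dy) (Q : 'cV[R]_dx -> 'M[R]_dy)
  (xi : 'cV[R]_dx) (yi : 'cV[R]_dy) : 'cV[R]_dy :=
  invmx (Q xi) *m (yi - f xi).

Definition dev {R : realType} {dx dy : nat}
  (fh : 'cV[R]_dx -> 'cV[R]_dy) (Qh : 'cV[R]_dx -> 'M[R]_dy)
  (fs : 'cV[R]_dx -> 'cV[R]_dy) (Qs : 'cV[R]_dx -> 'M[R]_dy)
  (x xi : 'cV[R]_dx) (yi : 'cV[R]_dy) : 'cV[R]_dy :=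
  (fh x + Qh x *m resid fh Qh xi yi) - (fs x + Qs x *m resid fs Qs xi yi).

(* Main.v *)
Require Import Defs.
From HB Require Import structures.
From mathcomp Require Import all_boot all_order all_algebra.
From mathcomp Require Import all_classical all_reals all_analysis.
From mathcomp Require Import ring lra.
Import Order.TTheory GRing.Theory Num.Theory.
Local Open Scope classical_set_scope.
Local Open Scope ring_scope.

Module Helpers.
Set Implicit Arguments. Unset Strict Implicit. Unset Printing Implicit Defensive.

Section LA.
Variable R : realType.

Lemma cs_sum (n : nat) (a b : 'I_n -> R) :
  (\sum_i a i * b i) ^+ 2 <= (\sum_i a i ^+ 2) * (\sum_i b i ^+ 2).
Proof.
set A := \sum_i a i ^+ 2; set B := \sum_i b i ^+ 2; set C := \sum_i a i * b i.
have A0 : 0 <= A by apply: sumr_ge0 => i _; exact: sqr_ge0.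
have E t : \sum_i (a i * t - b i) ^+ 2 = t ^+ 2 * A - 2 * t * C + B.
  rewrite /A /B /C mulr_sumr mulr_sumr -sumrB -big_split /=.
  by apply: eq_bigr => i _; ring.
have H t : 0 <= t ^+ 2 * A - 2 * t * C + B.
  by rewrite -E; apply: sumr_ge0 => i _; exact: sqr_ge0.
have [A00|Ap] := eqVneq A 0.
  have a0 i : a i = 0.
    apply/eqP; rewrite -sqrf_eq0; apply/eqP.
    by apply: (psumr_eq0P (P := predT) (fun i _ => sqr_ge0 (a i)) A00).
  by rewrite /C big1 ?expr0n ?A00 ?mul0r // => i _; rewrite a0 mul0r.
have Apos : 0 < A by rewrite lt_def Ap A0.
have := H (C / A).
have -> : (C / A) ^+ 2 * A - 2 * (C / A) * C + B = B - C ^+ 2 / A.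
  by field; rewrite Ap.
rewrite subr_ge0 ler_pdivrMr // => h.
by rewrite mulrC.
Qed.

Lemma enorm_ge0 n (v : 'cV[R]_n) : 0 <= enorm v.
Proof. exact: sqrtr_ge0. Qed.

Lemma enorm_sqr n (v : 'cV[R]_n) : enorm v ^+ 2 = \sum_i v i 0 ^+ 2.
Proof. by rewrite /enorm sqr_sqrtr //; apply: sumr_ge0 => i _; exact: sqr_ge0. Qed.

Lemma le_enorm n (u v : 'cV[R]_n) c : 0 <= c -> enorm u ^+ 2 <= c ^+ 2 * enorm v ^+ 2 ->
  enorm u <= c * enorm v.
Proof.
move=> c0 h; rewrite -(ler_pXn2r (n:=2)) ?nnegrE ?mulr_ge0 ?enorm_ge0 //.
by rewrite exprMn.
Qed.

Lemma enorm_dot n (u v : 'cV[R]_n) : \sum_i u i 0 * v i 0 <= enorm u * enorm v.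
Proof.
apply: le_trans (ler_norm _) _.
rewrite -sqrtr_sqr /enorm -sqrtrM; last by apply: sumr_ge0 => i _; exact: sqr_ge0.
rewrite ler_sqrt; last by rewrite mulr_ge0 //; apply: sumr_ge0 => i _; exact: sqr_ge0.
by have := cs_sum (fun i => u i 0) (fun i => v i 0).
Qed.

Lemma enorm_add n (u v : 'cV[R]_n) : enorm (u + v) <= enorm u + enorm v.
Proof.
rewrite -(ler_pXn2r (n:=2)) ?nnegrE ?addr_ge0 ?enorm_ge0 //.
have -> : (enorm u + enorm v) ^+ 2 = enorm u ^+ 2 + 2 * (enorm u * enorm v) + enorm v ^+ 2 by ring.
have -> : enorm (u + v) ^+ 2 = enorm u ^+ 2 + 2 * (\sum_i u i 0 * v i 0) + enorm v ^+ 2.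
  rewrite !enorm_sqr mulr_sumr -!big_split /=; apply: eq_bigr => i _.
  by rewrite !mxE; ring.
by rewrite lerD2r lerD2l ler_pM2l ?enorm_dot.
Qed.

Lemma enorm_opp n (v : 'cV[R]_n) : enorm (- v) = enorm v.
Proof. by rewrite /enorm; congr Num.sqrt; apply: eq_bigr => i _; rewrite mxE sqrrN. Qed.

Lemma enorm_scale n (a : R) (v : 'cV[R]_n) : enorm (a *: v) = `|a| * enorm v.
Proof.
rewrite /enorm -sqrtr_sqr -sqrtrM ?sqr_ge0 // mulr_sumr; congr Num.sqrt.
by apply: eq_bigr => i _; rewrite mxE exprMn.
Qed.

Lemma enorm_eq0 n (v : 'cV[R]_n) : enorm v = 0 -> v = 0.
Proof.
move=> h; have h2 : \sum_i v i 0 ^+ 2 = 0 by rewrite -enorm_sqr h expr0n.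
apply/matrixP => i j; rewrite ord1 mxE; apply/eqP; rewrite -sqrf_eq0; apply/eqP.
exact: (psumr_eq0P (P := predT) (fun i _ => sqr_ge0 (v i 0)) h2).
Qed.

Lemma enorm0 n : enorm (0 : 'cV[R]_n) = 0.
Proof. by rewrite /enorm big1 ?sqrtr0 // => i _; rewrite mxE expr0n. Qed.

Definition frob n (M : 'M[R]_n) := Num.sqrt (\sum_i \sum_j M i j ^+ 2).

Lemma enorm_mul_frob n (M : 'M[R]_n) v : enorm (M *m v) <= frob M * enorm v.
Proof.
apply: le_enorm; first exact: sqrtr_ge0.
rewrite enorm_sqr enorm_sqr.
rewrite /frob sqr_sqrtr; last by apply: sumr_ge0 => i _; apply: sumr_ge0 => j _; exact: sqr_ge0.
rewrite mulr_suml; apply: ler_sum => i _.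
rewrite mxE; exact: (cs_sum (fun j => M i j) (fun j => v j 0)).
Qed.

Lemma opnorm_set_ub n (M : 'M[R]_n) :
  has_ubound [set enorm (M *m v) | v in [set v : 'cV[R]_n | enorm v <= 1]].
Proof.
exists (frob M) => _ [v /= hv <-].
apply: le_trans (enorm_mul_frob M v) _.
by rewrite -[leRHS]mulr1 ler_wpM2l ?sqrtr_ge0.
Qed.

Lemma opnorm_ub n (M : 'M[R]_n) v : enorm v <= 1 -> enorm (M *m v) <= opnorm M.
Proof. by move=> hv; apply: (ub_le_sup (opnorm_set_ub M)); exists v. Qed.

Lemma opnorm_ge0 n (M : 'M[R]_n) : 0 <= opnorm M.
Proof.
by apply: le_trans (opnorm_ub M (v := 0) _); rewrite ?mulmx0 enorm0.
Qed.

Lemma opnormP n (M : 'M[R]_n) v : enorm (M *m v) <= opnorm M * enorm v.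
Proof.
have [e0|] := eqVneq (enorm v) 0.
  by rewrite (enorm_eq0 e0) mulmx0 enorm0 mulr0.
move=> en0; have ep : 0 < enorm v by rewrite lt_def en0 enorm_ge0.
have h := opnorm_ub M (v := (enorm v)^-1 *: v).
rewrite enorm_scale ger0_norm ?invr_ge0 ?enorm_ge0 // mulVf // lexx in h.
have {}h := h isT.
rewrite -scalemxAr enorm_scale ger0_norm ?invr_ge0 ?enorm_ge0 // in h.
by rewrite -ler_pdivrMr // mulrC.
Qed.

Lemma posdef_unit n (A : 'M[R]_n) : posdef A -> A \in unitmx.
Proof.
case=> sym pd; rewrite -row_free_unit -kermx_eq0; apply/eqP/row_matrixP => i.
rewrite row0; set w := row i (kermx A).
have wA : w *m A = 0 by rewrite /w -row_mul mulmx_ker row0.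
have Av : A *m w^T = 0 by rewrite -{1}sym -trmx_mul wA trmx0.
apply/eqP; apply: contraT => wn0.
have vn0 : w^T != 0 by apply: contra wn0 => /eqP h; rewrite -(trmxK w) h trmx0.
have := pd _ vn0; by rewrite -mulmxA Av mulmx0 mxE ltxx.
Qed.

Lemma enorm_sub n (u v : 'cV[R]_n) : enorm (u - v) <= enorm u + enorm v.
Proof. by apply: le_trans (enorm_add _ _) _; rewrite enorm_opp. Qed.

Lemma opnorm_split n (M N : 'M[R]_n) v :
  enorm (M *m v) <= (opnorm (M - N) + opnorm N) * enorm v.
Proof.
have -> : M *m v = (M - N) *m v + N *m v by rewrite mulmxBl subrK.
apply: le_trans (enorm_add _ _) _; rewrite mulrDl.
by apply: lerD; apply: opnormP.
Qed.

Lemma zid (V : zmodType) (f g p1 p2 p3 p4 : V) :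
  f + (p1 - p2) - (g + p4) = f - g + (p1 - p3 + (p3 - p4) - p2).
Proof.
have -> : p1 - p3 + (p3 - p4) = p1 - p4 by rewrite addrA subrK.
by rewrite opprD !addrA (addrAC _ (- p2) (- g)) (addrAC f p1 (- g)) (addrAC _ (- p2) (- p4)).
Qed.

Lemma dev_bound dx dy (fh fs : 'cV[R]_dx -> 'cV[R]_dy) (Qh Qs : 'cV[R]_dx -> 'M[R]_dy)
  x xi yi : Qs xi \in unitmx ->
  enorm (dev fh Qh fs Qs x xi yi) <=
    enorm (fh x - fs x)
    + opnorm (Qh x - Qs x) * (opnorm (invmx (Qh xi) - invmx (Qs xi)) * opnorm (Qs xi)
                              * enorm (resid fs Qs xi yi) + enorm (resid fs Qs xi yi))
    + opnorm (Qs x) * (opnorm (invmx (Qh xi) - invmx (Qs xi)) * opnorm (Qs xi)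
                              * enorm (resid fs Qs xi yi))
    + (opnorm (Qh x - Qs x) + opnorm (Qs x)) *
      ((opnorm (invmx (Qh xi) - invmx (Qs xi)) + opnorm (invmx (Qs xi)))
        * enorm (fh xi - fs xi)).
Proof.
move=> U.
set A := invmx (Qh xi); set B := invmx (Qs xi).
set r := yi - fs xi; set dd := fh xi - fs xi.
set a := enorm (fh x - fs x); set b := opnorm (Qh x - Qs x); set q := opnorm (Qs x).
set m := opnorm (A - B); set s := opnorm (Qs xi); set t := opnorm B.
set e := enorm (resid fs Qs xi yi); set d := enorm dd.
have eE : e = enorm (B *m r) by [].
have hr : r = Qs xi *m (B *m r) by rewrite mulKVmx.
have er : enorm r <= s * e by rewrite {1}hr; exact: opnormP.
have Ar : A *m r = (A - B) *m r + B *m r by rewrite mulmxBl subrK.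
have yd : yi - fh xi = r - dd by rewrite /r /dd opprB addrA subrK.
have -> : dev fh Qh fs Qs x xi yi =
   (fh x - fs x) + ((Qh x - Qs x) *m (A *m r) + Qs x *m ((A - B) *m r) - Qh x *m (A *m dd)).
  rewrite /dev /resid -/A -/B yd -/r mulmxBr !mulmxBl mulmxBr.
  set p1 := Qh x *m (A *m r); set p2 := Qh x *m (A *m dd); set p3 := Qs x *m (A *m r).
  set p4 := Qs x *m (B *m r).
  by rewrite mulmxBr -/p3 -/p4 (zid _ _ _ _ p3).
have ge0 := enorm_ge0; have oge0 := opnorm_ge0.
have h1 : enorm ((Qh x - Qs x) *m (A *m r)) <= b * (m * s * e + e).
  apply: le_trans (opnormP _ _) _; rewrite ler_wpM2l //.
  rewrite Ar; apply: le_trans (enorm_add _ _) _; rewrite -eE lerD2r.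
  apply: le_trans (opnormP _ _) _; rewrite -mulrA ler_wpM2l //.
have h2 : enorm (Qs x *m ((A - B) *m r)) <= q * (m * s * e).
  apply: le_trans (opnormP _ _) _; rewrite ler_wpM2l // -mulrA.
  apply: le_trans (opnormP _ _) _; rewrite ler_wpM2l //.
have h3 : enorm (Qh x *m (A *m dd)) <= (b + q) * ((m + t) * d).
  apply: le_trans (opnorm_split _ (Qs x) _) _; rewrite ler_wpM2l ?addr_ge0 //.
  exact: opnorm_split.
apply: le_trans (enorm_add _ _) _; rewrite -!addrA lerD2l.
apply: le_trans (enorm_add _ _) _; apply: lerD => //.
apply: le_trans (enorm_sub _ _) _; exact: lerD.
Qed.

End LA.

Section Prob.
Variables (d : measure_display) (T : measurableType d) (R : realType) (P : probability T R).

Definition small (A : set T) (e : R) :=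
  exists B, measurable B /\ A `<=` B /\ (P B < e%:E)%E.

Definition Z0 (Z : nat -> T -> R) := forall del, 0 < del -> forall e, 0 < e ->
  \forall n \near \oo, small [set w | del < `|Z n w|] e.

Definition Bd (Z : nat -> T -> R) := forall e, 0 < e ->
  exists K, \forall n \near \oo, small [set w | K < `|Z n w|] e.

Lemma outerP_le A B : measurable B -> A `<=` B -> (outerP P A <= P B)%E.
Proof. by move=> mB AB; apply: ereal_inf_lbound; exists B. Qed.

Lemma outerP_ge0 A : (0 <= outerP P A)%E.
Proof. by apply/ereal_infP => _ [B _ <-]. Qed.

Lemma outerP_fin A : outerP P A \is a fin_num.
Proof.
rewrite ge0_fin_numE ?outerP_ge0 //.
apply: le_lt_trans (outerP_le measurableT (subsetT A)) _.
by rewrite probability_setT ltry.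
Qed.

Lemma small_mono A A' e : A `<=` A' -> small A' e -> small A e.
Proof. by move=> AA' [B [mB [sB PB]]]; exists B; split => //; split => //; apply: subset_trans sB. Qed.

Lemma small_U A A' e e' : small A e -> small A' e' -> small (A `|` A') (e + e').
Proof.
move=> [B [mB [sB PB]]] [B' [mB' [sB' PB']]]; exists (B `|` B'); split; first exact: measurableU.
split; first by move=> w [/sB h|/sB' h]; [left|right].
by apply: le_lt_trans (measureU2 _ mB mB') _; rewrite EFinD lteD.
Qed.

Lemma cvg_Z0 Z c : cvg_in_prob P Z c -> Z0 (fun n w => Z n w - c).
Proof.
move=> H del del0 e e0; have /fine_cvgP [_ hc] := H del del0.
move/cvgrPdist_lt : hc => /(_ e e0); apply: filterS => n.
rewrite sub0r normrN /= => hn.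
have : (outerP P [set w | (del < `|Z n w - c|)%R] < e%:E)%E.
  by rewrite -[X in (X < _)%E](fineK (outerP_fin _)) lte_fin (le_lt_trans (ler_norm _) hn).
by case/ereal_inf_lt => _ [B [mB sB] <-] PB; exists B.
Qed.

Lemma Z0_cvg Z c : Z0 (fun n w => Z n w - c) -> cvg_in_prob P Z c.
Proof.
move=> H del del0; apply/fine_cvgP; split; first by apply: nearW => n; exact: outerP_fin.
apply/cvgrPdist_lt => e e0; have := H del del0 e e0; apply: filterS => n [B [mB [sB PB]]].
rewrite sub0r normrN /= ger0_norm ?fine_ge0 ?outerP_ge0 //.
by rewrite -lte_fin fineK ?outerP_fin // (le_lt_trans (outerP_le mB sB)).
Qed.

Lemma Z0_add Z W : Z0 Z -> Z0 W -> Z0 (fun n w => Z n w + W n w).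
Proof.
move=> hZ hW del del0 e e0.
have d2 : 0 < del / 2 by rewrite divr_gt0.
have e2 : 0 < e / 2 by rewrite divr_gt0.
apply: filterS2 (hZ _ d2 _ e2) (hW _ d2 _ e2) => n h1 h2.
rewrite (splitr e); apply: small_mono (small_U h1 h2) => w /= h.
have [hz|hz] := lerP `|Z n w| (del / 2); last by left.
have [hw|hw] := lerP `|W n w| (del / 2); last by right.
exfalso; have := ler_normD (Z n w) (W n w); lra.
Qed.

Lemma Z0_Bd Z : Z0 Z -> Bd Z.
Proof. by move=> hZ e e0; exists 1; exact: hZ. Qed.

Lemma small0 e : 0 < e -> small set0 e.
Proof. by move=> e0; exists set0; split => //; split => //; rewrite measure0 lte_fin. Qed.

Lemma Bd_cst c : Bd (fun _ _ => c).
Proof.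
move=> e e0; exists `|c|; apply: nearW => n; apply: small_mono (small0 e0) => w /=.
by rewrite ltxx.
Qed.

Lemma cvg_Bd Z c : cvg_in_prob P Z c -> Bd Z.
Proof.
move=> /cvg_Z0 H e e0; exists (`|c| + 1); apply: filterS (H 1 ltr01 e e0) => n.
apply: small_mono => w /= h.
have := ler_normD (Z n w - c) c; rewrite subrK; lra.
Qed.

Lemma Bd_absK (Z : nat -> T -> R) (e K : R) : (\forall n \near \oo, small [set w | K < `|Z n w|] e) ->
  \forall n \near \oo, small [set w | `|K| < `|Z n w|] e.
Proof.
apply: filterS => n; apply: small_mono => w /= h.
exact: le_lt_trans (ler_norm K) h.
Qed.

Lemma Bd_add Z W : Bd Z -> Bd W -> Bd (fun n w => Z n w + W n w).
Proof.
move=> hZ hW e e0; have e2 : 0 < e / 2 by rewrite divr_gt0.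
have [K1 /Bd_absK h1] := hZ _ e2; have [K2 /Bd_absK h2] := hW _ e2.
exists (`|K1| + `|K2|); apply: filterS2 h1 h2 => n h1 h2.
rewrite (splitr e); apply: small_mono (small_U h1 h2) => w /= h.
have [hz|hz] := lerP `|Z n w| `|K1|; last by left.
have [hw|hw] := lerP `|W n w| `|K2|; last by right.
exfalso; have := ler_normD (Z n w) (W n w); lra.
Qed.

Lemma Bd_mul Z W : Bd Z -> Bd W -> Bd (fun n w => Z n w * W n w).
Proof.
move=> hZ hW e e0; have e2 : 0 < e / 2 by rewrite divr_gt0.
have [K1 /Bd_absK h1] := hZ _ e2; have [K2 /Bd_absK h2] := hW _ e2.
exists (`|K1| * `|K2|); apply: filterS2 h1 h2 => n h1 h2.
rewrite (splitr e); apply: small_mono (small_U h1 h2) => w /= h.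
have [hz|hz] := lerP `|Z n w| `|K1|; last by left.
have [hw|hw] := lerP `|W n w| `|K2|; last by right.
exfalso; move: h; rewrite normrM ltNge ler_pM //.
Qed.

Lemma Z0_mulBd Z W : Z0 Z -> Bd W -> Z0 (fun n w => Z n w * W n w).
Proof.
move=> hZ hW del del0 e e0; have e2 : 0 < e / 2 by rewrite divr_gt0.
have [K /Bd_absK h2] := hW _ e2.
have K1 : 0 < `|K| + 1 by rewrite ltr_wpDl.
have dK : 0 < del / (`|K| + 1) by rewrite divr_gt0.
apply: filterS2 (hZ _ dK _ e2) h2 => n h1 h2.
rewrite (splitr e); apply: small_mono (small_U h1 h2) => w /= h.
have [hz|hz] := lerP `|Z n w| (del / (`|K| + 1)); last by left.
have [hw|hw] := lerP `|W n w| `|K|; last by right.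
exfalso; move: h; rewrite normrM ltNge.
have hw' : `|W n w| <= `|K| + 1 by lra.
have := ler_pM (normr_ge0 _) (normr_ge0 _) hz hw'.
by rewrite divfK ?gt_eqF // => ->.
Qed.

Lemma Z0_sqrt Z : Z0 Z -> Z0 (fun n w => Num.sqrt (Z n w)).
Proof.
move=> hZ del del0 e e0; have d2 : 0 < del ^+ 2 by rewrite exprn_gt0.
apply: filterS (hZ _ d2 _ e0) => n; apply: small_mono => w /=.
rewrite ger0_norm ?sqrtr_ge0 // => h; rewrite ltNge; apply/negP => hz; move: h; apply/negP.
rewrite -leNgt -(ger0_norm (ltW del0)) -sqrtr_sqr ler_sqrt ?sqr_ge0 //.
exact: le_trans (ler_norm _) hz.
Qed.

Lemma Z0_dom U F (N : set T) : measurable N -> P N = 0%E ->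
  (forall n w, ~ N w -> `|U n w| <= `|F n w|) -> Z0 F -> Z0 U.
Proof.
move=> mN PN hUF hF del del0 e e0; apply: filterS (hF _ del0 _ e0) => n [B [mB [sB PB]]].
exists (B `|` N); split; first exact: measurableU.
split.
  move=> w /= h; have [Nw|Nw] := pselect (N w); first by right.
  by left; apply: sB; apply: lt_le_trans h (hUF n w Nw).
by rewrite measureU0.
Qed.

End Prob.

Section Emean.
Variable R : realType.
Implicit Types (u v : nat -> R).

Lemma emean_le n u v : (forall i, u i <= v i) -> emean n u <= emean n v.
Proof.
move=> h; rewrite /emean ler_wpM2l ?invr_ge0 ?ler0n //.
by apply: ler_sum => i _.
Qed.

Lemma emean_ge0 n u : (forall i, 0 <= u i) -> 0 <= emean n u.
Proof. by move=> h; rewrite /emean mulr_ge0 ?invr_ge0 ?ler0n ?sumr_ge0. Qed.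

Lemma emeanD n u v : emean n (fun i => u i + v i) = emean n u + emean n v.
Proof. by rewrite /emean big_split mulrDr. Qed.

Lemma emeanZ n (c : R) u : emean n (fun i => c * u i) = c * emean n u.
Proof. by rewrite /emean -mulr_sumr mulrCA. Qed.

Lemma emean_cst n (c : R) : 0 <= c -> emean n (fun _ => c) <= c.
Proof.
move=> c0; rewrite /emean sumr_const card_ord.
case: n => [|n]; first by rewrite mulr0n mulr0.
by rewrite -(mulr_natr c) mulrC mulfK // pnatr_eq0.
Qed.

Lemma emean_cs n u v :
  emean n (fun i => u i * v i) <=
  Num.sqrt (emean n (fun i => u i ^+ 2)) * Num.sqrt (emean n (fun i => v i ^+ 2)).
Proof.
have hA : 0 <= emean n (fun i => u i ^+ 2) by apply: emean_ge0 => i; exact: sqr_ge0.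
rewrite -sqrtrM //.
apply: le_trans (ler_norm _) _.
rewrite -sqrtr_sqr ler_sqrt; last by rewrite mulr_ge0 // emean_ge0 // => i; exact: sqr_ge0.
rewrite /emean exprMn [X in _ <= X]mulrACA -[_^-1 * _^-1]expr2 ler_wpM2l ?exprn_ge0 ?invr_ge0 ?ler0n //.
exact: (cs_sum (fun i : 'I_n => u i) (fun i : 'I_n => v i)).
Qed.

Lemma sqrt_le1 (y : R) : 0 <= y -> Num.sqrt y <= 1 + y.
Proof.
move=> y0; have [y1|y1] := lerP y 1.
  apply: le_trans (_ : 1 <= _); last by rewrite lerDl.
  by rewrite -[leRHS]sqrtr1 ler_sqrt.
apply: le_trans (_ : y <= _); last by rewrite lerDr.
rewrite -{2}(sqr_sqrtr y0) expr2 ler_peMl ?sqrtr_ge0 //.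
by rewrite -[leLHS]sqrtr1 ler_sqrt // ltW.
Qed.

Lemma emean_bound n (dv m s e t d : nat -> R) (a b q : R) :
  0 <= a -> 0 <= b -> 0 <= q ->
  (forall i, 0 <= m i) -> (forall i, 0 <= s i) -> (forall i, 0 <= e i) ->
  (forall i, 0 <= t i) -> (forall i, 0 <= d i) ->
  (forall i, dv i <= a + b * (m i * s i * e i + e i) + q * (m i * s i * e i)
                       + (b + q) * ((m i + t i) * d i)) ->
  emean n dv <= a + b * (Num.sqrt (emean n (fun i => m i ^+ 2)) * (1 + (emean n (fun i => s i ^+ 4) + emean n (fun i => e i ^+ 4)) / 2) + (1 + emean n (fun i => e i ^+ 4)))
     + (Num.sqrt (emean n (fun i => m i ^+ 2)) * q) * (1 + (emean n (fun i => s i ^+ 4) + emean n (fun i => e i ^+ 4)) / 2) + (Num.sqrt (emean n (fun i => m i ^+ 2)) * Num.sqrt (emean n (fun i => d i ^+ 2))) * (b + q)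
     + (Num.sqrt (emean n (fun i => d i ^+ 2)) * (b + q)) * (1 + emean n (fun i => t i ^+ 2)).
Proof.
move=> a0 b0 q0 m0 s0 e0 t0 d0 hdv.
set S := Num.sqrt (emean n (fun i => m i ^+ 2)).
set D := Num.sqrt (emean n (fun i => d i ^+ 2)).
set G2 := (1 + (emean n (fun i => s i ^+ 4) + emean n (fun i => e i ^+ 4)) / 2).
have S0 : 0 <= S by apply: sqrtr_ge0.
have D0 : 0 <= D by apply: sqrtr_ge0.
have X1 : emean n (fun i => m i * s i * e i) <= S * G2.
  under eq_fun do rewrite -mulrA.
  apply: le_trans (emean_cs _ _ _) _; rewrite ler_wpM2l //.
  apply: le_trans (sqrt_le1 _) _; first by apply: emean_ge0 => i; exact: sqr_ge0.
  rewrite /G2 lerD2l -emeanD mulrC -emeanZ; apply: emean_le => i.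
  have := sqr_ge0 (s i ^+ 2 - e i ^+ 2).
  move=> h; nra.
have X2 : emean n e <= 1 + emean n (fun i => e i ^+ 4).
  apply: le_trans (_ : emean n (fun i => 1 + e i ^+ 4) <= _).
    apply: emean_le => i; have [h|h] := lerP (e i) 1.
      by apply: le_trans h _; rewrite lerDl exprn_ge0.
    apply: le_trans (_ : e i ^+ 4 <= _); last by rewrite lerDr.
    rewrite -[leLHS]expr1; apply: ler_eXn2l => //; exact: ltW.
  by rewrite emeanD lerD2r emean_cst.
have X3 : emean n (fun i => m i * d i) <= S * D by exact: emean_cs.
have X4 : emean n (fun i => t i * d i) <= (1 + emean n (fun i => t i ^+ 2)) * D.
  apply: le_trans (emean_cs _ _ _) _; rewrite ler_wpM2r //.
  by apply: sqrt_le1; apply: emean_ge0 => i; exact: sqr_ge0.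
apply: le_trans (emean_le n hdv) _.
rewrite !emeanD !emeanZ.
have Ea := emean_cst n a0.
rewrite (emeanD n (fun i => m i * s i * e i) e).
have -> : emean n (fun i => (m i + t i) * d i) =
   emean n (fun i => m i * d i) + emean n (fun i => t i * d i).
  by rewrite -emeanD; congr emean; apply: funext => i; rewrite mulrDl.
have h1 : b * (emean n (fun i => m i * s i * e i) + emean n e) <= b * (S * G2 + (1 + emean n (fun i => e i ^+ 4))).
  by rewrite ler_wpM2l // lerD.
have h2 : q * emean n (fun i => m i * s i * e i) <= S * q * G2.
  by rewrite [X in _ <= X]mulrAC [X in _ <= X]mulrC ler_wpM2l.
have h3 : (b + q) * (emean n (fun i => m i * d i) + emean n (fun i => t i * d i)) <=
   S * D * (b + q) + D * (b + q) * (1 + emean n (fun i => t i ^+ 2)).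
  have e3 : D * (b + q) * (1 + emean n (fun i => t i ^+ 2)) =
    (b + q) * ((1 + emean n (fun i => t i ^+ 2)) * D) by ring.
  have e4 : S * D * (b + q) = (b + q) * (S * D) by ring.
  rewrite e3 e4 -[X in _ <= X]mulrDr; apply: ler_wpM2l; [exact: addr_ge0 | exact: lerD].
lra.
Qed.
End Emean.

End Helpers.
Import Helpers.

Lemma cvg0_Z0 d (T : measurableType d) (R : realType) (P : probability T R) Z :
  cvg_in_prob P Z 0 -> Z0 P Z.
Proof.
move/cvg_Z0; rewrite (_ : (fun n w => Z n w - 0) = Z) //.
by apply: funext => n; apply: funext => w; rewrite subr0.
Qed.

Theorem theorem4 (R : realType) (dx dy : nat)
  (dO : measure_display) (Omega : measurableType dO) (P : probability Omega R)
  (fstar : 'cV[R]_dx -> 'cV[R]_dy) (Qstar : 'cV[R]_dx -> 'M[R]_dy)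
  (* the model  Y = f^*(X) + Q^*(X) eps *)
  (X : Omega -> Rvec R dx) (eps : Omega -> Rvec R dy) (Y : Omega -> Rvec R dy)
  (mX : measurable_fun setT X) (meps : measurable_fun setT eps)
  (mY : measurable_fun setT Y)
  (HY : forall w, Y w = fstar (X w) + Qstar (X w) *m eps w)
  (Hindep : indep2 P X eps)
  (Hmean : forall j : 'I_dy,
     P.-integrable setT (fun w => (eps w j 0)%:E) /\
     (\int[P]_w (eps w j 0)%:E = 0)%E)
  (HQpd : {ae pushforward P X, forall x, posdef (Qstar x)})
  (* data: (y^i, x^i) are joint observations of (Y, X) *)
  (xs : nat -> Omega -> Rvec R dx) (ys : nat -> Omega -> Rvec R dy)
  (Hdata : forall i : nat,
     measurable_fun setT (fun w => (ys i w, xs i w)) /\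
     forall A : set (Rvec R dy * Rvec R dx), measurable A ->
       P ((fun w => (ys i w, xs i w)) @^-1` A) = P ((fun w => (Y w, X w)) @^-1` A))
  (* estimators computed from D_n *)
  (fhat : nat -> Omega -> 'cV[R]_dx -> 'cV[R]_dy)
  (Qhat : nat -> Omega -> 'cV[R]_dx -> 'M[R]_dy)
  (Hest : forall (n : nat) (w w' : Omega),
     (forall i : nat, (i < n)%N -> xs i w = xs i w' /\ ys i w = ys i w') ->
     fhat n w = fhat n w' /\ Qhat n w = Qhat n w')
  (HQhatpd : {ae pushforward P X, forall x,
     forall n : nat, {ae P, forall w, posdef (Qhat n w x)}})
  (* (i) *)
  (HEQ4 : (\int[P]_w ((opnorm (Qstar (X w))) ^+ 4)%:E < +oo)%E)
  (HQ4 : cvg_in_prob P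
     (fun n w => emean n (fun i => (opnorm (Qstar (xs i w))) ^+ 4))
     (fine (\int[P]_w ((opnorm (Qstar (X w))) ^+ 4)%:E)))
  (HEQinv2 : (\int[P]_w ((opnorm (invmx (Qstar (X w)))) ^+ 2)%:E < +oo)%E)
  (HQinv2 : cvg_in_prob P
     (fun n w => emean n (fun i => (opnorm (invmx (Qstar (xs i w)))) ^+ 2))
     (fine (\int[P]_w ((opnorm (invmx (Qstar (X w)))) ^+ 2)%:E)))
  (* (ii) *)
  (HEeps4 : (\int[P]_w ((enorm (eps w : 'cV[R]_dy)) ^+ 4)%:E < +oo)%E)
  (Heps4 : cvg_in_prob P
     (fun n w => emean n (fun i =>
        (enorm (resid fstar Qstar (xs i w) (ys i w))) ^+ 4))
     (fine (\int[P]_w ((enorm (eps w : 'cV[R]_dy)) ^+ 4)%:E)))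
  (* (iii) *)
  (Hpt : {ae pushforward P X, forall x,
     cvg_in_prob P (fun n w => enorm (fhat n w x - fstar x)) 0 /\
     cvg_in_prob P (fun n w => opnorm (Qhat n w x - Qstar x)) 0})
  (Hf2 : cvg_in_prob P
     (fun n w => emean n (fun i => (enorm (fhat n w (xs i w) - fstar (xs i w))) ^+ 2))
     0)
  (HQ2 : cvg_in_prob P
     (fun n w => emean n (fun i =>
        (opnorm (invmx (Qhat n w (xs i w)) - invmx (Qstar (xs i w)))) ^+ 2))
     0) :
  {ae pushforward P X, forall x,
     cvg_in_prob P
       (fun n w => emean n (fun i =>
          enorm (dev (fhat n w) (Qhat n w) fstar Qstar x (xs i w) (ys i w))))
       0}.
Proof.
case: HQpd => N0 [mN0 PN0 sN0].
have mxs i : measurable_fun setT (xs i).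
  exact: (measurableT_comp measurable_snd (Hdata i).1).
have Nneg : P.-negligible (\bigcup_i (xs i @^-1` N0)).
  apply: negligible_bigcup => i; exists (xs i @^-1` N0); split => //.
    by rewrite -[_ @^-1` _]setTI; exact: mxs.
  have -> : xs i @^-1` N0 = (fun w => (ys i w, xs i w)) @^-1` (setT `*` N0).
    by apply/seteqP; split => w /=; [move=> h; split|case].
  apply: eq_trans ((Hdata i).2 _ (measurableX measurableT mN0)) _.
  have -> : (fun w => (Y w, X w)) @^-1` (setT `*` N0) = X @^-1` N0.
    by apply/seteqP; split => w /=; [case|move=> h; split].
  exact: PN0.
case: Nneg => A [mA PA sA].
have Qunit w : ~ A w -> forall i, Qstar (xs i w) \in unitmx.
  move=> Aw i; apply: posdef_unit.
  have [//|hn] := pselect (posdef (Qstar (xs i w))).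
  by exfalso; apply: Aw; apply: sA; exists i => //; apply: sN0.
case: Hpt => N1 [mN1 PN1 sN1].
exists N1; split => // x /= hx; apply: sN1 => /= -[ha hb]; apply: hx.
apply: Z0_cvg.
pose mm n w i := opnorm (invmx (Qhat n w (xs i w)) - invmx (Qstar (xs i w))).
pose ss (i : nat) w := opnorm (Qstar (xs i w)).
pose ee (i : nat) w := enorm (resid fstar Qstar (xs i w) (ys i w)).
pose tt (i : nat) w := opnorm (invmx (Qstar (xs i w))).
pose dd n w i := enorm (fhat n w (xs i w) - fstar (xs i w)).
pose aa n w := enorm (fhat n w x - fstar x).
pose bb n w := opnorm (Qhat n w x - Qstar x).
pose q := opnorm (Qstar x).
pose S n w := Num.sqrt (emean n (fun i => mm n w i ^+ 2)).
pose D n w := Num.sqrt (emean n (fun i => dd n w i ^+ 2)).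
pose G2 n w := 1 + (emean n (fun i => ss i w ^+ 4) + emean n (fun i => ee i w ^+ 4)) / 2.
pose E4 n w := emean n (fun i => ee i w ^+ 4).
pose T2 n w := emean n (fun i => tt i w ^+ 2).
pose F n w := aa n w + bb n w * (S n w * G2 n w + (1 + E4 n w))
     + (S n w * q) * G2 n w + (S n w * D n w) * (bb n w + q)
     + (D n w * (bb n w + q)) * (1 + T2 n w).
apply: (@Z0_dom _ _ _ P _ F A mA PA).
  move=> n w Aw; rewrite subr0 ger0_norm; last by apply: emean_ge0 => i; exact: enorm_ge0.
  apply: le_trans (ler_norm _).
  apply: emean_bound => [|||i|i|i|i|i|i]; rewrite ?enorm_ge0 ?opnorm_ge0 //.
  exact: dev_bound (Qunit w Aw i).
have ZS : Z0 P S by apply: Z0_sqrt; exact: cvg0_Z0 HQ2.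
have ZD : Z0 P D by apply: Z0_sqrt; exact: cvg0_Z0 Hf2.
have Za : Z0 P aa by exact: cvg0_Z0 ha.
have Zb : Z0 P bb by exact: cvg0_Z0 hb.
have BS4 := cvg_Bd HQ4.
have BE4 : Bd P E4 := cvg_Bd Heps4.
have BT2 : Bd P T2 := cvg_Bd HQinv2.
have BG2 : Bd P G2.
  apply: Bd_add; first exact: Bd_cst.
  apply: Bd_mul; last exact: Bd_cst.
  exact: Bd_add.
have Bbq : Bd P (fun n w => bb n w + q) by apply: Bd_add; [exact: Z0_Bd | exact: Bd_cst].
apply: Z0_add; last by apply: Z0_mulBd; [apply: Z0_mulBd | apply: Bd_add; [exact: Bd_cst|]].
apply: Z0_add; last by apply: Z0_mulBd => //; apply: Z0_mulBd => //; exact: Z0_Bd.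
apply: Z0_add; last by apply: Z0_mulBd => //; apply: Z0_mulBd => //; exact: Bd_cst.
apply: Z0_add => //.
apply: Z0_mulBd => //.
apply: Bd_add; last by apply: Bd_add => //; exact: Bd_cst.
by apply: Bd_mul => //; exact: Z0_Bd.
Qed.
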